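(* Let $d\geq 3$ and $s_1\leq s_2\leq\cdots\leq s_{d-1}$ be positive integers. Then $$\binom{s_1+s_2+\cdots+s_{d-1}}{s_1} < 2^{s_1-1}d$$ if and only if $s_1=s_2=\cdots=s_{d-1}=1$. *)

(* Defs.v *)
From mathcomp Require Import all_boot.

(* Main.v *)
Require Import Defs.
From mathcomp Require Import all_boot.
From mathcomp Require Import zify.

Lemma keyb a k : a.+1 <= k -> 2 ^ a * (k + 1) <= 'C(a.+1 + k, a.+1).
Proof.
elim: a k => [|a IH] k hk.
  by rewrite expn0 mul1n bin1 add1n addn1.
have := IH k (ltnW hk).
have := mul_bin_diag (a.+2 + k) a.+1.
rewrite expnS -mulnA => E H.
rewrite -(leq_pmul2l (ltn0Sn a.+1)) -E.
apply: leq_trans (leq_mul (leqnn _) H).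
rewrite mulnA leq_mul2r; apply/orP; right.
rewrite mulnC mul2n -addnn; lia.
Qed.

Theorem lemmaA1 (d : nat) (hd : 3 <= d) (s : 'I_d.-1 -> nat)
  (hpos : forall i, 0 < s i)
  (hmono : forall i j : 'I_d.-1, i <= j -> s i <= s j)
  (i0 : 'I_d.-1) (hi0 : nat_of_ord i0 = 0) :
  ('C(\sum_(i < d.-1) s i, s i0) < 2 ^ (s i0).-1 * d)
  <-> (forall i, s i = 1).
Proof.
split; last first.
  move=> h1; rewrite h1 bin1 expn0 mul1n.
  rewrite (eq_bigr (fun _ => 1)) // sum1_card card_ord.
  lia.
move=> hlt.
have hS : d.-1 * s i0 <= \sum_(i < d.-1) s i.
  rewrite -[d.-1 in X in X <= _]card_ord -sum_nat_const.
  by apply: leq_sum => i _; apply: hmono; rewrite hi0.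
have hsa : s i0 <= \sum_(i < d.-1) s i by rewrite (bigD1 i0) //= leq_addr.
move: hlt; case Ea: (s i0) => [|a].
  by have := hpos i0; rewrite Ea.
case: a Ea => [|a] Ea.
  rewrite bin1 expn0 mul1n => hlt i.
  apply/eqP; rewrite eqn_leq hpos andbT; apply/negP => /negP; rewrite -ltnNge => h2.
  have : \sum_(j < d.-1) s j >= d.
    rewrite (bigD1 i) //=.
    have : \sum_(j < d.-1 | j != i) 1 <= \sum_(j < d.-1 | j != i) s j.
      by apply: leq_sum => j _; apply: hpos.
    rewrite sum1_card cardC1 card_ord.
    set T := \sum_(_ < _ | _) _; move=> hh; lia.
  lia.
move=> hlt; exfalso.
rewrite Ea in hS hsa.
have hk := keyb a.+1 (\sum_(i < d.-1) s i - a.+2).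
rewrite (_ : \sum_(i < d.-1) s i = a.+2 + (\sum_(i < d.-1) s i - a.+2)) in hlt; last lia.
have : 2 ^ a.+1 * (\sum_(i < d.-1) s i - a.+2 + 1) < 2 ^ a.+1 * d.
  apply: leq_ltn_trans hlt; apply: hk.
  nia.
rewrite ltn_pmul2l ?expn_gt0 //.
nia.
Qed.
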